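(* For every nonnegative integer $n$, $$\sum_{k=0}^{\infty}(-1)^k(4k+1)\,\frac{(-2n)_k\,(-n+\tfrac14)_k\,(\tfrac12)_k}{k!\,(n+\tfrac54)_k\,(2n+\tfrac32)_k}=\left(\frac{2^2}{3^3}\right)^n\frac{(\tfrac54)_n^2}{(\tfrac{13}{12})_n(\tfrac{5}{12})_n}.$$ (The sum is finite, since $(-2n)_k=0$ for $k>2n$.)
   Context: $(a)_j=\Gamma(a+j)/\Gamma(a)=a(a+1)\cdots(a+j-1)$ denotes the rising factorial (Pochhammer symbol), with $(a)_0=1$. *)

(* Defs.v *)
From HB Require Import structures.
From mathcomp Require Import all_boot all_order all_algebra.
Set Implicit Arguments. Unset Strict Implicit. Unset Printing Implicit Defensive.
Import Order.TTheory GRing.Theory Num.Theory.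
Local Open Scope ring_scope.

Definition poch (R : nzRingType) (a : R) (j : nat) : R :=
  \prod_(i < j) (a + i%:R).

(* Main.v *)
Require Import Defs.
From HB Require Import structures.
From mathcomp Require Import all_boot all_order all_algebra.
From Stdlib Require Import Ring Field.
Import Order.TTheory GRing.Theory Num.Theory.
Local Open Scope ring_scope.
Definition radd (x y : rat) : rat := x + y.
Definition rmul (x y : rat) : rat := x * y.
Definition ropp (x : rat) : rat := - x.
Definition rinv (x : rat) : rat := x^-1.
Definition rsub (x y : rat) : rat := radd x (ropp y).
Definition rdiv (x y : rat) : rat := rmul x (rinv y).
Definition rzero : rat := 0.
Definition rone : rat := 1.

Lemma rat_ring_theory : @ring_theory rat rzero rone radd rmul rsub ropp (@eq rat).
Proof.
split; rewrite /radd /rmul /rsub /ropp /rzero /rone.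
- exact: add0r. - exact: addrC. - exact: addrA. - exact: mul1r. - exact: mulrC.
- exact: mulrA. - exact: mulrDl. - by []. - exact: subrr.
Qed.
Lemma rat_field_theory : @field_theory rat rzero rone radd rmul rsub ropp rdiv rinv (@eq rat).
Proof.
split; [exact: rat_ring_theory| by [] | by [] | ].
rewrite /rmul /rinv /rone /rzero => p /eqP p0; exact: mulVf.
Qed.
Add Field ratF : rat_field_theory.

Ltac is_lit n := lazymatch n with O => idtac | S ?m => is_lit m end.
Ltac mkbin n :=
  lazymatch n with
  | O => constr:(0:rat)
  | S O => constr:(1:rat)
  | _ => let h := eval compute in (Nat.div2 n) in
         let b := eval compute in (Nat.odd n) in
         let t := mkbin h in
         lazymatch b with true => constr:((1+1)*t+1 : rat) | false => constr:((1+1)*t : rat) end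
  end.
Ltac binlits :=
  repeat match goal with
  | |- context [Algebra.natmul ?o ?n] =>
      is_lit n;
      let e := mkbin n in
      replace (Algebra.natmul o n) with e by (symmetry; apply/eqP; vm_compute; reflexivity)
  end.
Ltac nrm t := lazymatch t with
 | @Algebra.add _ ?x ?y => let a := nrm x in let b := nrm y in constr:(radd a b)
 | @GRing.mul _ ?x ?y => let a := nrm x in let b := nrm y in constr:(rmul a b)
 | @Algebra.opp _ ?x => let a := nrm x in constr:(ropp a)
 | @GRing.inv _ ?x => let a := nrm x in constr:(rinv a)
 | @Algebra.zero _ => constr:(rzero)
 | @GRing.one _ => constr:(rone)
 | _ => t end.
Ltac ratnorm := match goal with |- @eq _ ?a ?b => let a' := nrm a in let b' := nrm b in change (@eq rat a' b') end.
Ltac rfield := binlits; ratnorm; field.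
Ltac rring := binlits; ratnorm; ring.

Ltac nneg := first [ assumption | by [] | apply: addr_ge0; nneg | apply: mulr_ge0; nneg | apply: ltW; pos ]
with pos := first [ by [] | apply: mulr_gt0; pos | apply: ltr_wpDl; [nneg|pos]
                  | (rewrite addrC; apply: ltr_wpDl; [nneg|pos]) ].
Ltac sidec := repeat split; rewrite /radd /rmul /ropp /rzero /rone /rinv;
  first [ by apply/eqP | apply/eqP; rewrite gt_eqF //; pos ].

Lemma pochS (a : rat) k : poch a k.+1 = poch a k * (a + k%:R).
Proof. by rewrite /poch big_ord_recr. Qed.
Lemma poch0 (a : rat) : poch a 0 = 1.
Proof. by rewrite /poch big_ord0. Qed.
Lemma poch_gt0 (a : rat) k : 0 < a -> 0 < poch a k.
Proof. move=> ha; rewrite /poch; apply: prodr_gt0 => i _; rewrite addrC; apply: ltr_wpDl => //. Qed.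
Lemma poch_negnat (m k : nat) : (m < k)%N -> poch (- m%:R : rat) k = 0.
Proof.
elim: k => // k IH; rewrite ltnS leq_eqVlt => /orP [/eqP -> | /IH h].
  by rewrite pochS addNr mulr0.
by rewrite pochS h mul0r.
Qed.

Definition Ar (N : rat) (k : nat) : rat :=
  (-1) ^+ k * (poch (- (2 * N)) k * poch (- N + 1 / 4) k * poch (1 / 2) k)
     / ((k`!)%:R * poch (N + 5 / 4) k * poch (2 * N + 3 / 2) k).

Lemma Ar0 N : Ar N 0 = 1.
Proof. rewrite /Ar !poch0 expr0 fact0; rfield; sidec. Qed.

Lemma ArS (N : rat) k : 0 <= N ->
  Ar N k.+1 = Ar N k * (- ((k%:R - 2 * N) * (k%:R - N + 1/4) * (k%:R + 1/2)))
     / ((k%:R + 1) * (k%:R + N + 5/4) * (k%:R + 2 * N + 3/2)).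
Proof.
move=> hN.
rewrite /Ar !pochS factS natrM exprS (mulrSr (1:rat) k).
have h4 : poch (N + 5/4) k != 0 by rewrite gt_eqF // poch_gt0 //; pos.
have h5 : poch (2 * N + 3/2) k != 0 by rewrite gt_eqF // poch_gt0 //; pos.
have hf : (k`!)%:R != 0 :> rat by rewrite pnatr_eq0 -lt0n fact_gt0.
have hK : 0 <= k%:R :> rat by [].
move: h4 h5 hf hK.
move: (poch (N + 5/4) k) (poch (2 * N + 3/2) k) ((k`!)%:R : rat) => p4 p5 f h4 h5 hf.
move: (poch (- (2 * N)) k) (poch (- N + 1 / 4) k) (poch (1 / 2) k) ((-1) ^+ k : rat) (k%:R : rat) => q1 q2 q3 s K hK.
rfield; sidec.
Qed.


Definition D0 (N : rat) : rat := (2*N+2)*(2*N+1)*(N+3/4)*(N+5/4)*(2*N+3/2)*(2*N+5/2).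
Definition Pr (N K : rat) : rat :=
  - ((K-2*N-2)*(K-2*N-1)*(K-N-3/4)*(N+K+5/4)*(2*N+K+5/2)*(2*N+K+3/2)).

Lemma D0_neq0 N : 0 <= N -> D0 N != 0.
Proof. move=> hN; rewrite /D0 gt_eqF //; pos. Qed.

Lemma Ashift (N : rat) k : 0 <= N -> Ar N k * D0 N = Ar (N+1) k * Pr N k%:R.
Proof.
move=> hN; have hN1 : 0 <= N + 1 by nneg.
have hD := D0_neq0 _ hN.
elim: k => [|k IH].
  rewrite !Ar0 /D0 /Pr; rring.
rewrite (ArS _ _ hN) (ArS _ _ hN1) (mulrSr (1:rat) k).
move: IH; move: (Ar N k) (Ar (N+1) k) => a b IH.
have ha : a = b * Pr N k%:R / D0 N by rewrite -IH mulfK.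
rewrite ha; move: hD; rewrite /D0 /Pr => hD.
have hK : 0 <= k%:R :> rat by [].
move: (k%:R : rat) hK => K hK.
rfield; sidec.
Qed.

Definition tm (n k : nat) : rat :=
     (-1) ^+ k * (4 * k%:R + 1) *
     (poch (- (2 * n)%:R : rat) k * poch (- n%:R + 1 / 4) k * poch (1 / 2) k)
     / ((k`!)%:R * poch (n%:R + 5 / 4) k * poch ((2 * n)%:R + 3 / 2) k).

Lemma tm_Ar n k : tm n k = (4 * k%:R + 1) * Ar n%:R k.
Proof. rewrite /tm /Ar natrM -!mulrA. by rewrite mulrCA. Qed.

Lemma Ar_zero n j : (2 * n < j)%N -> Ar n%:R j = 0.
Proof. move=> h; rewrite /Ar -natrM poch_negnat //. by rewrite !(mul0r, mulr0). Qed.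

Definition cc (N : rat) : rat := 4/27*(N+5/4)*(N+5/4)/((N+13/12)*(N+5/12)).
Definition Qp (N K : rat) : rat := ((-(137/864) - 383/432*N - 14/9*N*N - 23/27*N*N*N)*(N+3/4) + (-(71/1728) - N/8 - 11/108*N*N)*K + (67/864 + N/4 + 11/54*N*N)*K*K + (K*K*K - K*K*K*K)/54) / ((N+5/12)*(N+1/2)*(N+3/4)*(N+3/4)*(N+1)*(N+13/12)).
Definition Pp (N K : rat) : rat := K*(K+N+5/4)*(K+2*N+5/2)*Qp N K.
Definition G (n k : nat) : rat := Pp n%:R k%:R * Ar (n%:R + 1) k.

Lemma perk n k : tm n.+1 k - cc n%:R * tm n k = G n k.+1 - G n k.
Proof.
have hN : 0 <= n%:R :> rat by [].
have hN1 : 0 <= n%:R + 1 :> rat by nneg.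
rewrite !tm_Ar /G (mulrSr (1:rat) n) (ArS _ _ hN1) (mulrSr (1:rat) k).
have hD := D0_neq0 _ hN.
have ha : Ar n%:R k = Ar (n%:R + 1) k * Pr n%:R k%:R / D0 n%:R by rewrite -Ashift // mulfK.
rewrite ha; move: hD; rewrite /D0 /Pr /cc /Pp /Qp => hD.
have hK : 0 <= k%:R :> rat by [].
set b := Ar _ k.
set K := (k%:R : rat) in hK *.
set N := (n%:R : rat) in hN hD *.
clearbody b K N.
rfield; sidec.
Qed.

Lemma sum_ext n : \sum_(k < (2*n).+1) tm n k = \sum_(k < (2*n).+3) tm n k.
Proof.
have z : forall j, (2 * n < j)%N -> tm n j = 0.
  by move=> j hj; rewrite tm_Ar Ar_zero ?mulr0.
rewrite [in RHS]big_ord_recr [in RHS]big_ord_recr /= !z //.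
by rewrite !addr0.
Qed.

Lemma G0 n : G n 0 = 0.
Proof. by rewrite /G /Pp !mul0r. Qed.

Lemma Gend n : G n (2*n).+3 = 0.
Proof.
rewrite /G -(mulrSr (1:rat) n) Ar_zero ?mulr0 //.
by rewrite mulnS.
Qed.

Lemma recS n : \sum_(k < (2*n).+3) tm n.+1 k = cc n%:R * \sum_(k < (2*n).+1) tm n k.
Proof.
rewrite sum_ext; apply/eqP; rewrite -subr_eq0 mulr_sumr -sumrB.
rewrite (eq_bigr (fun k : 'I_ _ => G n (k:nat).+1 - G n k)); last by move=> k _; exact: perk.
rewrite -(big_mkord xpredT (fun k => G n k.+1 - G n k)) telescope_sumr //.
by rewrite Gend G0 subrr.
Qed.

Definition RHS (n : nat) : rat := (4 / 27) ^+ n * (poch (5 / 4 : rat) n) ^+ 2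
     / (poch (13 / 12) n * poch (5 / 12) n).

Lemma RHS_S n : RHS n.+1 = cc n%:R * RHS n.
Proof.
rewrite /RHS /cc !pochS exprS !expr2.
have h1 : poch (13/12 : rat) n != 0 by rewrite gt_eqF // poch_gt0.
have h2 : poch (5/12 : rat) n != 0 by rewrite gt_eqF // poch_gt0.
have hN : 0 <= n%:R :> rat by [].
move: h1 h2; set q1 := poch (13/12) n; set q2 := poch (5/12) n => h1 h2.
set p := poch (5/4) n; set x := (4/27) ^+ n.
set N := (n%:R : rat) in hN *.
clearbody q1 q2 p x N.
rfield; sidec.
Qed.

Theorem theorem3 (n : nat) :
  \sum_(k < (2 * n).+1)
     (-1) ^+ k * (4 * k%:R + 1) *
     (poch (- (2 * n)%:R : rat) k * poch (- n%:R + 1 / 4) k * poch (1 / 2) k)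
     / ((k`!)%:R * poch (n%:R + 5 / 4) k * poch ((2 * n)%:R + 3 / 2) k)
  = (4 / 27) ^+ n * (poch (5 / 4 : rat) n) ^+ 2
     / (poch (13 / 12) n * poch (5 / 12) n).
Proof.
change (\sum_(k < (2 * n).+1) tm n k = RHS n).
elim: n => [|n IH].
  rewrite big_ord1 tm_Ar Ar0 /RHS /poch !big_ord0; apply/eqP; vm_compute; reflexivity.
rewrite mulnS RHS_S -IH -recS.
by [].
Qed.
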